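(* Let $d=e_1+\varepsilon\gamma$ with $\gamma\in\Gamma$ and $\varepsilon\ge0$ sufficiently small (orientations chosen so that $Vd\ge0$), and let $I^*(d)$ be its hyperplane index set. Then $$A_{I^*(d)}e_1=(1-\lambda)e_1+\frac{\lambda}{n}e.$$
   Context: $\mathcal G$ is a simple connected oriented graph with $n$ nodes, $m$ edges, incidence matrix $C$, PTDF matrix $V=C(C^TC)^+$; $e$ all-ones, $J=ee^T$, $\lambda\in(0,1)$. $g^*(d)$ is the unique minimizer of $\frac12\sum_ig_i^2$ over $g\ge0$ with $e^Tg=e^Td$ and $-\lambda|Vd|\le V(d-g)\le\lambda|Vd|$. $\Gamma=\{\gamma\in\mathbb R^n:\gamma_1=0,\gamma\ge0,e^T\gamma=1\}$. With hyperplanes $H_0=\{g:e^Tg=e^Td\}$, $H_i=\{g:(Vg)_i=(1-\lambda)(Vd)_i\}$, $H_{m+i}=\{g:(Vg)_i=(1+\lambda)(Vd)_i\}$, $I^*(d)=\{j:g^*(d)\in H_j\}$. For $I\subseteq\{0,\dots,2m\}$, with $I_1=I\cap\{1,\dots,m\}$, $I_2=I\cap\{m+1,\dots,2m\}$, $V_{I_1}$ the rows $j\in I_1$ of $V$ and $V_{I_2}$ the rows $k-m$, $k\in I_2$: $A_I=\frac1nJ+[V_{I_1}^T\ V_{I_2}^T]\big([V_{I_1};V_{I_2}][V_{I_1}^T\ V_{I_2}^T]\big)^+[(1-\lambda)V_{I_1};(1+\lambda)V_{I_2}]$ (so that $g^*(d)=A_{I^*(d)}d$). *)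

(* Defs.v *)
From HB Require Import structures.
From mathcomp Require Import all_boot all_order all_algebra.
From mathcomp Require Import boolp reals.
From Stdlib Require Import ClassicalEpsilon.
Set Implicit Arguments. Unset Strict Implicit. Unset Printing Implicit Defensive.
Import Order.TTheory GRing.Theory Num.Theory.
Local Open Scope ring_scope.

Section Defs.
Variable R : realType.

Definition is_MP_pinv (p q : nat) (A : 'M[R]_(p, q)) (X : 'M[R]_(q, p)) : Prop :=
  [/\ A *m X *m A = A, X *m A *m X = X,
      (A *m X)^T = A *m X & (X *m A)^T = X *m A].

Definition pinv (p q : nat) (A : 'M[R]_(p, q)) : 'M[R]_(q, p) :=
  epsilon (inhabits 0) (is_MP_pinv A).

(* An oriented graph on nodes 'I_n with m edges; edge k goes from tl k to hd k. *)
Definition adjacent (n m : nat) (tl hd : 'I_m -> 'I_n) : rel 'I_n :=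
  fun i j => [exists k, ((tl k == i) && (hd k == j)) || ((tl k == j) && (hd k == i))].

Definition simple_connected_graph (n m : nat) (tl hd : 'I_m -> 'I_n) : Prop :=
  [/\ (forall k, tl k != hd k),
      (forall k k', [set tl k; hd k] = [set tl k'; hd k'] -> k = k')
    & (forall i j, connect (adjacent tl hd) i j)].

Definition incidence (n m : nat) (tl hd : 'I_m -> 'I_n) : 'M[R]_(m, n) :=
  \matrix_(k < m, i < n) ((i == tl k)%:R - (i == hd k)%:R).

Definition PTDF (n m : nat) (C : 'M[R]_(m, n)) : 'M[R]_(m, n) :=
  C *m pinv (C^T *m C).

Definition absv (p : nat) (x : 'cV[R]_p) : 'cV[R]_p := map_mx Num.norm x.

Definition sumv (p : nat) (x : 'cV[R]_p) : R := \sum_i x i 0.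

Definition feasible (n m : nat) (V : 'M[R]_(m, n)) (lam : R) (d g : 'cV[R]_n) : Prop :=
  [/\ (forall i, 0 <= g i 0), sumv g = sumv d &
      forall k, - (lam * absv (V *m d) k 0) <= (V *m (d - g)) k 0 <= lam * absv (V *m d) k 0].

Definition objective (n : nat) (g : 'cV[R]_n) : R := 2^-1 * \sum_i (g i 0) ^+ 2.

Definition is_gstar (n m : nat) (V : 'M[R]_(m, n)) (lam : R) (d g : 'cV[R]_n) : Prop :=
  feasible V lam d g /\ forall h, feasible V lam d h -> objective g <= objective h.

Definition gstar (n m : nat) (V : 'M[R]_(m, n)) (lam : R) (d : 'cV[R]_n) : 'cV[R]_n :=
  epsilon (inhabits 0) (is_gstar V lam d).

Definition in_H (n m : nat) (V : 'M[R]_(m, n)) (lam : R) (d g : 'cV[R]_n) (j : nat) : Prop :=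
  if j == 0%N then sumv g = sumv d
  else if (j <= m)%N then
    exists k : 'I_m, val k = j.-1 /\ (V *m g) k 0 = (1 - lam) * (V *m d) k 0
  else exists k : 'I_m, val k = (j - m).-1 /\ (V *m g) k 0 = (1 + lam) * (V *m d) k 0.

Definition Istar (n m : nat) (V : 'M[R]_(m, n)) (lam : R) (d : 'cV[R]_n) : {set 'I_(2 * m).+1} :=
  [set j : 'I_(2 * m).+1 | `[< in_H V lam d (gstar V lam d) j >] ].

(* I_1 (shifted to edge indices 0..m-1) and I_2 (shifted by m+1) *)
Definition I1of (m : nat) (I : {set 'I_(2 * m).+1}) : {set 'I_m} :=
  [set k : 'I_m | (inord k.+1 : 'I_(2 * m).+1) \in I].
Definition I2of (m : nat) (I : {set 'I_(2 * m).+1}) : {set 'I_m} :=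
  [set k : 'I_m | (inord (m + k.+1) : 'I_(2 * m).+1) \in I].

Definition rows_of (n m : nat) (V : 'M[R]_(m, n)) (S : {set 'I_m}) : 'M[R]_(#|S|, n) :=
  \matrix_(r < #|S|, j < n) V (enum_val r) j.

Definition A_I (n m : nat) (V : 'M[R]_(m, n)) (lam : R) (I : {set 'I_(2 * m).+1}) : 'M[R]_n :=
  let V1 := rows_of V (I1of I) in
  let V2 := rows_of V (I2of I) in
  let W := col_mx V1 V2 in
  let W' := col_mx ((1 - lam) *: V1) ((1 + lam) *: V2) in
  (n%:R)^-1 *: const_mx 1 + W^T *m pinv (W *m W^T) *m W'.

Definition unitv (n : nat) (i : 'I_n) : 'cV[R]_n := delta_mx i 0.

Definition in_Gamma (n : nat) (i1 : 'I_n) (gam : 'cV[R]_n) : Prop :=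
  [/\ gam i1 0 = 0, (forall i, 0 <= gam i 0) & sumv gam = 1].

End Defs.

(* Main.v *)
Require Import Defs.
From HB Require Import structures.
From mathcomp Require Import all_classical all_reals all_analysis.
From mathcomp Require Import all_boot all_order all_algebra.
From mathcomp Require Import reals.
From mathcomp Require Import boolp zify ring lra.
From Stdlib Require Import ClassicalEpsilon.
Require Import Defs.
Import Order.TTheory GRing.Theory Num.Theory.
Import numFieldNormedType.Exports.
Local Open Scope ring_scope.
Set Implicit Arguments. Unset Strict Implicit. Unset Printing Implicit Defensive.


Section Pinv.
Variable R : realType.

Lemma mxmulT_eq0 (p q : nat) (K : 'M[R]_(p, q)) : K *m K^T = 0 -> K = 0.
Proof.
move=> H; apply/matrixP => i j; rewrite mxE.
have /matrixP /(_ i i) := H; rewrite !mxE => /eqP.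
under eq_bigr do rewrite mxE -expr2.
rewrite psumr_eq0; last by move=> k _; exact: sqr_ge0.
by move=> /allP /(_ j (mem_index_enum _)); rewrite sqrf_eq0 => /eqP.
Qed.

Lemma gram_unit (p r : nat) (F : 'M[R]_(p, r)) : row_full F -> F^T *m F \in unitmx.
Proof.
move=> fF; rewrite -row_free_unit; apply: inj_row_free => v Hv.
have h1 : (v *m F^T) *m (v *m F^T)^T = 0.
  by rewrite trmx_mul trmxK !mulmxA -(mulmxA v) Hv mul0mx.
have h2 := mxmulT_eq0 h1.
have fFt : row_free F^T by rewrite /row_free mxrank_tr.
apply: (row_free_inj fFt); by rewrite h2 mul0mx.
Qed.

Lemma gram_unit' (r q : nat) (G : 'M[R]_(r, q)) : row_free G -> G *m G^T \in unitmx.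
Proof.
move=> fG; have := @gram_unit q r G^T; rewrite trmxK; apply.
by rewrite /row_full mxrank_tr.
Qed.

Lemma MP_fact (p q r : nat) (F : 'M[R]_(p, r)) (G : 'M[R]_(r, q)) :
  row_full F -> row_free G -> exists X, is_MP_pinv (F *m G) X.
Proof.
move=> fF fG.
have uF := gram_unit fF.
have uG := gram_unit' fG.
set M := F^T *m F in uF *; set N := G *m G^T in uG *.
have sM : M^T = M by rewrite /M trmx_mul trmxK.
have sN : N^T = N by rewrite /N trmx_mul trmxK.
exists (G^T *m invmx N *m invmx M *m F^T); split.
- rewrite !mulmxA -(mulmxA F G) -/N -(mulmxA F N) mulmxV // mulmx1.
  by rewrite -(mulmxA _ F^T F) -/M -(mulmxA F) mulVmx // mulmx1.
- rewrite !mulmxA.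
  rewrite -(mulmxA _ F^T F) -/M -(mulmxA _ (invmx M) M) mulVmx // mulmx1.
  rewrite -(mulmxA _ G G^T) -/N -(mulmxA _ (invmx N) N) mulVmx // mulmx1.
  by [].
- rewrite !mulmxA -(mulmxA F G) -/N -(mulmxA F N) mulmxV // mulmx1.
  by rewrite !trmx_mul trmxK trmx_inv sM mulmxA.
- rewrite !mulmxA.
  rewrite -(mulmxA _ F^T F) -/M -(mulmxA _ (invmx M) M) mulVmx // mulmx1.
  by rewrite !trmx_mul trmxK trmx_inv sN mulmxA.
Qed.

Lemma MP_exists (p q : nat) (A : 'M[R]_(p, q)) : exists X, is_MP_pinv A X.
Proof.
have := @MP_fact p q _ (col_base A) (row_base A) (col_base_full A) (row_base_free A).
by rewrite mulmx_base.
Qed.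

Lemma pinvP (p q : nat) (A : 'M[R]_(p, q)) : is_MP_pinv A (pinv A).
Proof.
rewrite /pinv; apply: ClassicalEpsilon.epsilon_spec; exact: MP_exists.
Qed.

End Pinv.


Section Basic.
Variable R : realType.

Lemma sum_delta (n : nat) (a : 'I_n) : \sum_(i < n) ((i == a)%:R : R) = 1.
Proof.
rewrite (bigD1 a) //= eqxx big1 ?addr0 // => i /negbTE ->; by [].
Qed.

Lemma sum_delta_mul (n : nat) (a : 'I_n) (f : 'I_n -> R) :
  \sum_(i < n) ((i == a)%:R * f i) = f a.
Proof.
rewrite (bigD1 a) //= eqxx mul1r big1 ?addr0 // => i /negbTE ->; by rewrite mul0r.
Qed.

Definition dot (n : nat) (x y : 'cV[R]_n) : R := \sum_i x i 0 * y i 0.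

Lemma dotE (n : nat) (x y : 'cV[R]_n) : dot x y = (x^T *m y) 0 0.
Proof. by rewrite /dot mxE; apply: eq_bigr => i _; rewrite mxE. Qed.

Lemma sumvE (n : nat) (x : 'cV[R]_n) : sumv x = dot (const_mx 1) x.
Proof. by rewrite /sumv /dot; apply: eq_bigr => i _; rewrite mxE mul1r. Qed.

Lemma sumvD (n : nat) (x y : 'cV[R]_n) : sumv (x + y) = sumv x + sumv y.
Proof. by rewrite /sumv -big_split; apply: eq_bigr => i _; rewrite mxE. Qed.
Lemma sumvN (n : nat) (x : 'cV[R]_n) : sumv (- x) = - sumv x.
Proof. by rewrite /sumv -sumrN; apply: eq_bigr => i _; rewrite mxE. Qed.
Lemma sumvB (n : nat) (x y : 'cV[R]_n) : sumv (x - y) = sumv x - sumv y.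
Proof. by rewrite sumvD sumvN. Qed.
Lemma sumvZ (n : nat) a (x : 'cV[R]_n) : sumv (a *: x) = a * sumv x.
Proof. by rewrite /sumv mulr_sumr; apply: eq_bigr => i _; rewrite mxE. Qed.
Lemma sumv_e (n : nat) : sumv (const_mx 1 : 'cV[R]_n) = n%:R.
Proof. by rewrite /sumv; under eq_bigr do rewrite mxE; rewrite sumr_const card_ord. Qed.
Lemma sumv_mul (n p : nat) (M : 'M[R]_(p, n)) (x : 'cV[R]_n) :
  sumv (M *m x) = dot ((M^T) *m const_mx 1) x.
Proof.
rewrite sumvE !dotE !trmx_mul trmxK mulmxA; by [].
Qed.

Lemma MP_AAY (k : nat) (A Y : 'M[R]_k) : A^T = A -> is_MP_pinv A Y ->
  A *m (A *m Y) = A.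
Proof.
move=> hA [h1 _ h3 _].
have hQA : (A *m Y) *m A = A by [].
have := congr1 trmx hQA; rewrite trmx_mul hA h3 => ->; by [].
Qed.

Lemma MP_ker (k p : nat) (A Y : 'M[R]_k) (x : 'M[R]_(k, p)) : A^T = A -> is_MP_pinv A Y ->
  A *m x = 0 -> Y *m x = 0.
Proof.
move=> hA [_ h2 h3 _] hx.
have -> : Y = Y *m Y^T *m A.
  by rewrite -{1}h2 -mulmxA -h3 trmx_mul hA mulmxA.
by rewrite -mulmxA hx mulmx0.
Qed.

End Basic.

Section Graph.
Variables (R : realType) (n m : nat) (tl hd : 'I_m -> 'I_n).
Hypothesis G : simple_connected_graph tl hd.

Local Notation C := (incidence R tl hd).
Local Notation L := (C^T *m C).
Local Notation X := (pinv (C^T *m C)).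
Local Notation e := (const_mx 1 : 'cV[R]_n).

Lemma Cx (x : 'cV[R]_n) k : (C *m x) k 0 = x (tl k) 0 - x (hd k) 0.
Proof.
rewrite mxE; under eq_bigr do rewrite mxE mulrBl.
by rewrite sumrB !sum_delta_mul.
Qed.

Lemma Ce : C *m e = 0.
Proof. by apply/matrixP => k j; rewrite ord1 Cx !mxE subrr. Qed.

Lemma Le : L *m e = 0.
Proof. by rewrite -mulmxA Ce mulmx0. Qed.

Lemma Lsym : L^T = L.
Proof. by rewrite trmx_mul trmxK. Qed.

Lemma Xe : X *m e = 0.
Proof. apply: MP_ker; [exact: Lsym | exact: pinvP | exact: Le]. Qed.

Lemma Xe_old : X *m e = 0.
Proof.
have [_ h2 h3 _] := pinvP (C^T *m C).
have -> : X = X *m X^T *m L.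
  by rewrite -{1}h2 -mulmxA -h3 [(L *m X)^T]trmx_mul Lsym !mulmxA.
rewrite -!mulmxA. rewrite Ce. by rewrite !mulmx0.
Qed.

Lemma conn_const (y : 'cV[R]_n) :
  (forall k, y (tl k) 0 = y (hd k) 0) -> forall i j, y i 0 = y j 0.
Proof.
move=> H i j; case: G => _ _ /(_ i j) /connectP [p].
elim: p i => [|a p IH] i /=; first by move=> _ ->.
move=> /andP [hadj hp] hl; rewrite -(IH a hp hl).
move: hadj => /existsP [k /orP [/andP [/eqP <- /eqP <-] | /andP [/eqP <- /eqP <-]]].
  by rewrite H.
by rewrite H.
Qed.


Lemma kerL (y : 'cV[R]_n) (i0 : 'I_n) : L *m y = 0 -> y = (y i0 0) *: e.
Proof.
move=> H.
have H1 : (C *m y)^T *m (C *m y)^T^T = 0.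
  by rewrite trmxK trmx_mul -mulmxA (mulmxA C^T) H mulmx0.
have H2 := mxmulT_eq0 H1.
have H3 : C *m y = 0 by rewrite -(trmxK (C *m y)) H2 trmx0.
have H4 : forall k, y (tl k) 0 = y (hd k) 0.
  move=> k; apply/eqP; rewrite -subr_eq0 -Cx H3 mxE //.
apply/matrixP => i j; rewrite ord1 !mxE mulr1; exact: conn_const.
Qed.


Lemma LLX : L *m (L *m X) = L.
Proof. apply: MP_AAY; [exact: Lsym | exact: pinvP]. Qed.

Lemma LXsym : (L *m X)^T = L *m X.
Proof. by have [_ _ h3 _] := pinvP (C^T *m C). Qed.

Lemma LXe : (L *m X) *m e = 0.
Proof. by rewrite -mulmxA Xe mulmx0. Qed.

Lemma Qx (i0 : 'I_n) (x : 'cV[R]_n) :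
  (L *m X) *m x = x - (sumv x / n%:R) *: e.
Proof.
set y := x - (L *m X) *m x.
have Ly : L *m y = 0.
  by rewrite /y mulmxBr (mulmxA L) LLX subrr.
have hy := kerL i0 Ly.
have sy : sumv y = sumv x.
  rewrite /y sumvB sumv_mul LXsym LXe /dot.
  rewrite big1 ?subr0 // => i _; by rewrite mxE mul0r.
have hn : (0 < n)%N by apply: leq_ltn_trans (ltn_ord i0).
have n0 : (n%:R : R) != 0 by rewrite pnatr_eq0 -lt0n.
have hc : y i0 0 = sumv x / n%:R.
  rewrite -sy {2}hy sumvZ sumv_e mulfK //.
have -> : (L *m X) *m x = x - y by rewrite /y opprB addrC subrK.
by rewrite {1}hy hc.
Qed.

Lemma Ve : (C *m X) *m e = 0.
Proof. by rewrite -mulmxA Xe mulmx0. Qed.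

Lemma CtV : C^T *m (C *m X) = L *m X.
Proof. by rewrite mulmxA. Qed.

Lemma dot_CV (i0 : 'I_n) (y x : 'cV[R]_n) : sumv x = 0 ->
  dot (C *m y) ((C *m X) *m x) = dot y x.
Proof.
move=> sx; rewrite !dotE trmx_mul -[_ *m C^T *m _]mulmxA (mulmxA C^T) CtV (Qx i0) sx mul0r scale0r subr0.
by [].
Qed.

Lemma sumv_unit (i1 : 'I_n) : sumv (unitv R i1) = 1.
Proof.
rewrite /sumv /unitv; under eq_bigr do rewrite mxE eqxx andbT.
exact: sum_delta.
Qed.

Lemma Lx_entry (x : 'cV[R]_n) j :
  (L *m x) j 0 = \sum_k C k j * (x (tl k) 0 - x (hd k) 0).
Proof.
rewrite -mulmxA mxE; apply: eq_bigr => k _; by rewrite mxE Cx.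
Qed.

Lemma maxprin (i1 : 'I_n) j : (X *m unitv R i1) j 0 <= (X *m unitv R i1) i1 0.
Proof.
set th := X *m unitv R i1.
have hn : (0 < n)%N by apply: leq_ltn_trans (ltn_ord i1).
have Lth : L *m th = unitv R i1 - n%:R^-1 *: e.
  by rewrite /th mulmxA (Qx i1) sumv_unit div1r.
case: (@arg_maxP _ R _ i1 predT (fun j => th j 0) isT) => j0 _ Hmax.
suff -> : i1 = j0 by apply: Hmax.
apply/eqP; apply: contraT => hne.
have h1 : (L *m th) j0 0 = - n%:R^-1.
  by rewrite Lth !mxE eq_sym (negbTE hne) /= mulr1 sub0r.
have h2 : 0 <= (L *m th) j0 0.
  rewrite Lx_entry; apply: sumr_ge0 => k _; rewrite mxE.
  case: G => hneq _ _.
  case: (eqVneq j0 (tl k)) => [ht|ht]; case: (eqVneq j0 (hd k)) => [hh|hh].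
  - by move: (hneq k); rewrite -ht -hh; case/eqP.
  - rewrite -ht subr0 mul1r subr_ge0; exact: Hmax.
  - rewrite -hh sub0r mulN1r oppr_ge0 subr_le0; exact: Hmax.
  - by rewrite subrr mul0r.
have : 0 < n%:R^-1 :> R by rewrite invr_gt0 ltr0n.
by rewrite -oppr_lt0 -h1 ltNge h2.
Qed.

Lemma Ve1_in (i1 : 'I_n) k : hd k = i1 -> ((C *m X) *m unitv R i1) k 0 <= 0.
Proof.
move=> hk; rewrite -mulmxA Cx hk subr_le0; exact: maxprin.
Qed.

End Graph.


Section Dot.
Variable R : realType.

Lemma term_le_sum (T : finType) (F : T -> R) j : (forall i, 0 <= F i) -> F j <= \sum_i F i.
Proof. by move=> h; rewrite (bigD1 j) //= lerDl sumr_ge0. Qed.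

Lemma small_t (T : finType) (a b : T -> R) : (forall i, 0 < a i) ->
  exists t : R, 0 < t <= 1 /\ forall i, t * `|b i| < a i.
Proof.
move=> ha.
set S := \sum_i (`|b i| / a i).
have S0 : 0 <= S by apply: sumr_ge0 => i _; rewrite divr_ge0 // ltW.
have S1 : 0 < 1 + S by rewrite ltr_pwDl.
exists (1 + S)^-1; split.
  by rewrite invr_gt0 S1 /= invf_le1 // lerDl.
move=> i; rewrite mulrC -ltr_pdivlMr ?invr_gt0 // invrK.
rewrite -ltr_pdivrMl // mulrC.
apply: le_lt_trans (_ : S < 1 + S); last by rewrite ltrDr ltr01.
apply: (@term_le_sum _ (fun i => `|b i| / a i)) => k.
by rewrite divr_ge0 // ltW.
Qed.

Lemma dotC (n : nat) (x y : 'cV[R]_n) : dot x y = dot y x.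
Proof. by rewrite /dot; apply: eq_bigr => i _; rewrite mulrC. Qed.
Lemma dotDl (n : nat) (x y w : 'cV[R]_n) : dot (x + y) w = dot x w + dot y w.
Proof. by rewrite /dot -big_split; apply: eq_bigr => i _; rewrite mxE mulrDl. Qed.
Lemma dotZl (n : nat) a (x w : 'cV[R]_n) : dot (a *: x) w = a * dot x w.
Proof. by rewrite /dot mulr_sumr; apply: eq_bigr => i _; rewrite mxE mulrA. Qed.
Lemma dotNl (n : nat) (x w : 'cV[R]_n) : dot (- x) w = - dot x w.
Proof. by rewrite -scaleN1r dotZl mulN1r. Qed.
Lemma dotBl (n : nat) (x y w : 'cV[R]_n) : dot (x - y) w = dot x w - dot y w.
Proof. by rewrite dotDl dotNl. Qed.
Lemma dotDr (n : nat) (x y w : 'cV[R]_n) : dot w (x + y) = dot w x + dot w y.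
Proof. by rewrite dotC dotDl !(dotC w). Qed.
Lemma dotZr (n : nat) a (x w : 'cV[R]_n) : dot w (a *: x) = a * dot w x.
Proof. by rewrite dotC dotZl dotC. Qed.
Lemma dotBr (n : nat) (x y w : 'cV[R]_n) : dot w (x - y) = dot w x - dot w y.
Proof. by rewrite dotC dotBl !(dotC w). Qed.
Lemma dot0l (n : nat) (w : 'cV[R]_n) : dot 0 w = 0.
Proof. by rewrite /dot big1 // => i _; rewrite mxE mul0r. Qed.
Lemma dot0r (n : nat) (w : 'cV[R]_n) : dot w 0 = 0.
Proof. by rewrite dotC dot0l. Qed.
Lemma dot_ge0 (n : nat) (x : 'cV[R]_n) : 0 <= dot x x.
Proof. by apply: sumr_ge0 => i _; rewrite -expr2 sqr_ge0. Qed.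
Lemma dot_eq0 (n : nat) (x : 'cV[R]_n) : dot x x = 0 -> x = 0.
Proof.
move=> /eqP; rewrite /dot psumr_eq0; last by move=> i _; rewrite -expr2 sqr_ge0.
move=> /allP H; apply/matrixP => i j; rewrite ord1 mxE.
by have /(_ (mem_index_enum i)) := H i; rewrite -expr2 sqrf_eq0 => /eqP.
Qed.
Lemma objectiveE (n : nat) (x : 'cV[R]_n) : objective x = 2^-1 * dot x x.
Proof. by rewrite /objective /dot; congr (_ * _); apply: eq_bigr => i _; rewrite expr2. Qed.
Lemma dot_mul (n k : nat) (M : 'M[R]_(k, n)) (x : 'cV[R]_k) (y : 'cV[R]_n) :
  dot (M^T *m x) y = dot x (M *m y).
Proof. by rewrite !dotE trmx_mul trmxK mulmxA. Qed.

Lemma mxBE (p q : nat) (A B : 'M[R]_(p, q)) i j : (A - B) i j = A i j - B i j.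
Proof. by rewrite !mxE. Qed.
Lemma mxDE (p q : nat) (A B : 'M[R]_(p, q)) i j : (A + B) i j = A i j + B i j.
Proof. by rewrite !mxE. Qed.
Lemma mxZE (p q : nat) a (A : 'M[R]_(p, q)) i j : (a *: A) i j = a * A i j.
Proof. by rewrite !mxE. Qed.

End Dot.

Section Step9.
Variables (R : realType) (n m : nat) (V : 'M[R]_(m, n)) (lam : R) (d : 'cV[R]_n).
Local Notation g := (gstar V lam d).
Local Notation I := (Istar V lam d).
Local Notation e := (const_mx 1 : 'cV[R]_n).

Lemma memI1 k : (k \in I1of I) = ((V *m g) k 0 == (1 - lam) * (V *m d) k 0).
Proof.
rewrite /I1of inE /Istar inE.
have hv : nat_of_ord (inord k.+1 : 'I_(2 * m).+1) = k.+1.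
  by rewrite inordK //; have := ltn_ord k; lia.
apply/asboolP/eqP; rewrite /in_H hv /= ltn_ord.
  by move=> [k' [hk' H]]; have <- : k' = k by apply: val_inj.
by move=> H; exists k.
Qed.

Lemma memI2 k : (k \in I2of I) = ((V *m g) k 0 == (1 + lam) * (V *m d) k 0).
Proof.
rewrite /I2of inE /Istar inE.
have hv : nat_of_ord (inord (m + k.+1) : 'I_(2 * m).+1) = (m + k.+1)%N.
  by rewrite inordK //; have := ltn_ord k; lia.
have h1 : (m + k.+1 == 0)%N = false by rewrite addnS.
have h2 : (m + k.+1 <= m)%N = false by rewrite addnS ltnNge leq_addr.
have h3 : (m + k.+1 - m).-1 = k by rewrite addKn.
apply/asboolP/eqP; rewrite /in_H hv h1 h2 h3 /=.
  by move=> [k' [hk' H]]; have <- : k' = k by apply: val_inj.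
by move=> H; exists k.
Qed.

Lemma rows_ofE (S : {set 'I_m}) (x : 'cV[R]_n) r :
  (rows_of V S *m x) r 0 = (V *m x) (enum_val r) 0.
Proof. by rewrite !mxE; apply: eq_bigr => j _; rewrite mxE. Qed.

Lemma Jmul (x : 'cV[R]_n) : (const_mx 1 : 'M[R]_n) *m x = sumv x *: e.
Proof.
apply/matrixP => i j; rewrite ord1 !mxE mulr1 /sumv.
by apply: eq_bigr => k _; rewrite mxE mul1r.
Qed.

Lemma SXW (k : nat) (W : 'M[R]_(k, n)) : W *m W^T *m pinv (W *m W^T) *m W = W.
Proof.
set S := W *m W^T; set Y := pinv S.
have [h1 _ h3 _] := pinvP S.
have sS : S^T = S by rewrite /S trmx_mul trmxK.
set K := (S *m Y - 1%:M) *m W.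
have hKK : K *m K^T = 0.
  rewrite /K trmx_mul mulmxA -(mulmxA _ W) -/S.
  have -> : (S *m Y - 1%:M) *m S = 0 by rewrite mulmxBl h1 mul1mx subrr.
  by rewrite mul0mx.
have := mxmulT_eq0 hKK; rewrite /K mulmxBl mul1mx => /eqP; rewrite subr_eq0 => /eqP.
by [].
Qed.

Hypotheses (hn : (0 < n)%N) (Ve : V *m e = 0) (Vd : forall k, 0 <= (V *m d) k 0)
  (gopt : is_gstar V lam d g) (gpos : forall i, 0 < g i 0).

Lemma AI_d : A_I V lam I *m d = g.
Proof.
set S1 := I1of I; set S2 := I2of I.
set V1 := rows_of V S1; set V2 := rows_of V S2.
set W := col_mx V1 V2.
set W' := col_mx ((1 - lam) *: V1) ((1 + lam) *: V2).
set Xw := pinv (W *m W^T).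
have hA : A_I V lam I = n%:R^-1 *: const_mx 1 + W^T *m Xw *m W' by [].
have Wg : W *m g = W' *m d.
  rewrite /W /W' !mul_col_mx -!scalemxAl; congr col_mx; apply/matrixP => r j;
    rewrite ord1 [RHS]mxE !rows_ofE.
    by apply/eqP; rewrite -memI1 enum_valP.
  by apply/eqP; rewrite -memI2 enum_valP.
have We : W *m e = 0.
  rewrite /W mul_col_mx; apply/eqP; rewrite col_mx_eq0; apply/andP; split;
  apply/eqP/matrixP => r j; by rewrite ord1 rows_ofE Ve !mxE.
have hSXW := SXW W; rewrite -/Xw in hSXW.
set p := A_I V lam I *m d.
have hp : p = (sumv d / n%:R) *: e + W^T *m (Xw *m (W *m g)).
  by rewrite /p hA mulmxDl -scalemxAl Jmul scalerA mulrC Wg !mulmxA.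
set z := g - p.
have Wz : W *m z = 0.
  rewrite /z hp mulmxBr mulmxDr -scalemxAr We scaler0 add0r !mulmxA hSXW.
  exact: subrr.
have [[gnn gsum gbox] gmin] := gopt.
have n0 : (n%:R : R) != 0 by rewrite pnatr_eq0 -lt0n.
have sp : sumv p = sumv d.
  rewrite hp sumvD sumvZ sumv_e mulfVK // sumv_mul trmxK We dot0l addr0 //.
have sz : sumv z = 0 by rewrite /z sumvB sp gsum subrr.
have pz : dot p z = 0.
  rewrite hp dotDl dotZl -sumvE sz mulr0 add0r dot_mul Wz dot0r //.
have gpz : g = p + z by rewrite /z addrC subrK.
have [V1z V2z] : V1 *m z = 0 /\ V2 *m z = 0.
  by move: Wz => /eqP; rewrite /W mul_col_mx col_mx_eq0 => /andP [/eqP -> /eqP ->].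
set u := fun k => (V *m (d - g)) k 0.
set a := fun k => absv (V *m d) k 0.
have ha k : a k = (V *m d) k 0.
  by rewrite /a mxE ger0_norm // Vd.
have hu k : u k = (V *m d) k 0 - (V *m g) k 0 by rewrite /u mulmxBr mxBE.
have inact k : (V *m z) k 0 != 0 ->
    (- (lam * a k) < u k) && (u k < lam * a k).
  move=> hz.
  have n1 : k \notin S1.
    apply: contra hz => kS; apply/eqP.
    move/matrixP: V1z => /(_ (enum_rank_in kS k) 0).
    by rewrite rows_ofE enum_rankK_in // => ->; rewrite mxE.
  have n2 : k \notin S2.
    apply: contra hz => kS; apply/eqP.
    move/matrixP: V2z => /(_ (enum_rank_in kS k) 0).
    by rewrite rows_ofE enum_rankK_in // => ->; rewrite mxE.
  rewrite /S1 memI1 in n1; rewrite /S2 memI2 in n2.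
  have /andP [b1 b2] := gbox k; rewrite -/(u k) -/(a k) in b1 b2.
  rewrite !lt_neqAle b1 b2 !andbT; apply/andP; split.
    apply: contra n2 => /eqP h; apply/eqP.
    move: h; rewrite hu ha => h; rewrite mulrDl mul1r; lra.
  apply: contra n1 => /eqP h; apply/eqP.
  move: h; rewrite hu ha => h; rewrite mulrBl mul1r; lra.
pose ak k := if (V *m z) k 0 == 0 then 1
              else Num.min (lam * a k - u k) (u k + lam * a k).
have akpos k : 0 < ak k.
  rewrite /ak; case: eqP => [_|/eqP hz]; first exact: ltr01.
  have /andP [c1 c2] := inact k hz.
  by rewrite lt_min subr_gt0 c2 /= -ltrBlDr sub0r.
have [t1 [/andP [t1p t1le] Ht1]] := @small_t R _ (fun i => g i 0) (fun i => z i 0) gpos.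
have [t2 [/andP [t2p t2le] Ht2]] := @small_t R _ ak (fun k => (V *m z) k 0) akpos.
set t := Num.min t1 t2.
have tp : 0 < t by rewrite lt_min t1p t2p.
have tle1 : t <= t1 by rewrite ge_min lexx.
have tle2 : t <= t2 by rewrite ge_min lexx orbT.
set h := g - t *: z.
have hfeas : feasible V lam d h.
  split.
  - move=> i; rewrite /h mxBE mxZE.
    have := Ht1 i; rewrite /= => H.
    have H2 : t * `|z i 0| <= t1 * `|z i 0| by rewrite ler_wpM2r.
    have H3 : t * z i 0 <= t * `|z i 0| by apply: ler_wpM2l; [exact: ltW | exact: ler_norm].
    lra.
  - by rewrite /h sumvB sumvZ sz mulr0 subr0.
  - move=> k.
    have -> : (V *m (d - h)) k 0 = u k + t * (V *m z) k 0.
      by rewrite /h /u opprB addrCA addrC mulmxDr mxDE -scalemxAr mxZE.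
    rewrite -/(a k).
    case: (eqVneq ((V *m z) k 0) 0) => [->|hz].
      by rewrite mulr0 addr0; exact: gbox.
    have /andP [c1 c2] := inact k hz.
    have := Ht2 k; rewrite /ak (negbTE hz) /= lt_min => /andP [d1 d2].
    have H2 : t * `|(V *m z) k 0| <= t2 * `|(V *m z) k 0| by rewrite ler_wpM2r.
    have H3 : `|t * (V *m z) k 0| = t * `|(V *m z) k 0|.
      by rewrite normrM ger0_norm // ltW.
    have H4 := ler_norm (t * (V *m z) k 0).
    have H5 : - (t * (V *m z) k 0) <= `|t * (V *m z) k 0|.
      by rewrite -normrN ler_norm.
    apply/andP; split; lra.
have := gmin h hfeas; rewrite !objectiveE.
have -> : dot h h = dot g g - t * (2 - t) * dot z z.
  have pz' : dot p g = dot p p by move: pz; rewrite dotBr => /eqP; rewrite subr_eq0 => /eqP.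
  rewrite /h !(dotBl, dotBr, dotZl, dotZr) (dotC g p) pz'.
  ring.
have zz0 := dot_ge0 z.
have tt : 0 < t * (2 - t).
  apply: mulr_gt0 => //; have : t <= 1 by apply: le_trans t1le.
  by move=> ?; lra.
move=> H.
have hzz : dot z z = 0.
  apply/eqP; rewrite eq_le zz0 andbT.
  have : t * (2 - t) * dot z z <= 0 by lra.
  by rewrite pmulr_rle0.
have := dot_eq0 hzz; rewrite /z => /eqP; rewrite subr_eq0 => /eqP.
by move=> ->.
Qed.
End Step9.


From mathcomp Require Import all_classical all_reals all_analysis.
Require Import Defs.
Section Exist.
Variable R : realType.
Local Open Scope classical_set_scope.
Local Open Scope ring_scope.

Lemma lin_cont (n : nat) (c : 'I_n -> R) :
  continuous (fun u : 'rV[R]_n => \sum_j c j * u ord0 j).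
Proof.
apply: continuous_big => [|j _]; first exact: add_continuous.
move=> u; apply: continuousM; first exact: cst_continuous.
exact: coord_continuous.
Qed.


Lemma quad_cont (n : nat) :
  continuous (fun u : 'rV[R]_n => 2^-1 * \sum_j u ord0 j * u ord0 j).
Proof.
move=> u.
apply: (continuousM (s:=fun=> 2^-1) (t:=fun u : 'rV[R]_n => \sum_j u ord0 j * u ord0 j)).
  exact: cst_continuous.
apply: continuous_big => [|j _]; first exact: add_continuous.
by move=> v; apply: continuousM; exact: coord_continuous.
Qed.

Lemma mulTE (n m : nat) (V : 'M[R]_(m, n)) (u : 'rV[R]_n) k :
  (V *m u^T) k 0 = \sum_j V k j * u ord0 j.
Proof. by rewrite mxE; apply: eq_bigr => j _; rewrite mxE. Qed.

Lemma closed_pre (n : nat) (f : 'rV[R]_n -> R) (A : set R) :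
  continuous f -> closed A -> closed (f @^-1` A).
Proof. by move=> cf cA; exact: (proj1 (continuous_closedP f) cf A cA). Qed.

Lemma gstar_exists (n m : nat) (V : 'M[R]_(m, n)) (lam : R) (d : 'cV[R]_n) :
  (exists h, feasible V lam d h) -> is_gstar V lam d (gstar V lam d).
Proof.
move=> [h0 fh0].
rewrite /gstar; apply: ClassicalEpsilon.epsilon_spec.
set F := [set u : 'rV[R]_n | feasible V lam d u^T].
have F0 : F !=set0 by exists h0^T; rewrite /F /= trmxK.
have Fsub : F `<=` [set u : 'rV[R]_n | forall i, `[0, sumv d]%classic (u ord0 i)].
  move=> u [hnn hs _] i /=; rewrite in_itv /=.
  have := hnn i; rewrite mxE => ->; rewrite -hs /sumv /=.
  rewrite (bigD1 i) //= mxE lerDl sumr_ge0 // => j _; have := hnn j; by rewrite mxE.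
have Fcl : closed F.
  have -> : F = [set u : 'rV[R]_n | forall i, 0 <= u ord0 i] `&`
     ((fun u : 'rV[R]_n => \sum_j 1 * u ord0 j) @^-1` [set sumv d]) `&`
     [set u : 'rV[R]_n | forall k, - (lam * absv (V *m d) k 0) <=
         (V *m d) k 0 - \sum_j V k j * u ord0 j <= lam * absv (V *m d) k 0].
    apply/seteqP; split => u /=.
      move=> [hnn hs hb]; split; [split|].
      - by move=> i; have := hnn i; rewrite mxE.
      - rewrite -hs /sumv; apply: eq_bigr => j _; by rewrite mxE mul1r.
      - by move=> k; have := hb k; rewrite mulmxBr mxBE mulTE.
    move=> [[hnn hs] hb]; split.
    - by move=> i; rewrite mxE; exact: hnn.
    - rewrite -hs /sumv; apply: eq_bigr => j _; by rewrite mxE mul1r.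
    - by move=> k; have := hb k; rewrite mulmxBr mxBE mulTE.
  apply: closedI; first apply: closedI.
  - have -> : [set u : 'rV[R]_n | forall i, 0 <= u ord0 i] =
        \bigcap_(i in [set: 'I_n]) ((fun u : 'rV[R]_n => u ord0 i) @^-1` [set x | 0 <= x]).
      by apply/seteqP; split => u /= H i; [move=> _|]; apply: H.
    apply: closed_bigI => i _; apply: closed_pre; [exact: coord_continuous | exact: closed_ge].
  - apply: closed_pre; [exact: lin_cont | exact: closed_eq].
  - have -> : [set u : 'rV[R]_n | forall k, - (lam * absv (V *m d) k 0) <=
         (V *m d) k 0 - \sum_j V k j * u ord0 j <= lam * absv (V *m d) k 0] =
        \bigcap_(k in [set: 'I_m])
         (((fun u : 'rV[R]_n => \sum_j V k j * u ord0 j) @^-1`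
            [set x | (V *m d) k 0 - lam * absv (V *m d) k 0 <= x]) `&`
          ((fun u : 'rV[R]_n => \sum_j V k j * u ord0 j) @^-1`
            [set x | x <= (V *m d) k 0 + lam * absv (V *m d) k 0])).
      apply/seteqP; split => u /= H k //.
        have /andP [h1 h2] := H k; move=> _; split => /=; lra.
      have [h1 h2] := H k I; rewrite /= in h1 h2; apply/andP; split; lra.
    apply: closed_bigI => k _; apply: closedI; apply: closed_pre;
      (try exact: lin_cont); [exact: closed_ge | exact: closed_le].
have Fco : compact F.
  apply: (subclosed_compact Fcl _ Fsub).
  apply: (@rV_compact _ _ (fun=> `[0, sumv d]%classic)) => i.
  exact: segment_compact.
have fcont : {within F, continuous (fun u : 'rV[R]_n => 2^-1 * \sum_j u ord0 j * u ord0 j)}.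
  apply: continuous_subspaceT; exact: quad_cont.
have [c cF cmin] := compact_EVT_min F0 Fco fcont.
exists c^T; split; first by move: cF; rewrite inE.
move=> h fh.
have := cmin h^T; rewrite inE /F /= trmxK => /(_ fh).
rewrite /objective; congr (_ * _ <= _ * _); apply: eq_bigr => j _; by rewrite !mxE expr2.
Qed.

End Exist.
From mathcomp Require Import all_boot all_order all_algebra.
From mathcomp Require Import reals boolp.
Require Import Defs.
Import Order.TTheory GRing.Theory Num.Theory.
Local Open Scope ring_scope.


Section Aux.
Variable R : realType.

Lemma inv_sum_bound (T : finType) (f : T -> R) :
  0 < (1 + \sum_p (if f p == 0 then 0 else `|f p|^-1))^-1 /\
  forall p, f p != 0 -> (1 + \sum_p (if f p == 0 then 0 else `|f p|^-1))^-1 <= `|f p|.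
Proof.
set S := \sum_p _.
have S0 : 0 <= S.
  apply: sumr_ge0 => p _; case: eqP => // _; by rewrite invr_ge0.
have S1 : 0 < 1 + S by rewrite ltr_pwDl.
split; first by rewrite invr_gt0.
move=> p hp.
have fp : 0 < `|f p| by rewrite normr_gt0.
have : `|f p|^-1 <= S.
  have := @term_le_sum R T (fun p => if f p == 0 then 0 else `|f p|^-1) p.
  rewrite (negbTE hp); apply => q; case: eqP => // _; by rewrite invr_ge0.
move=> h; rewrite -(invrK `|f p|) lef_pV2 ?posrE ?invr_gt0 //.
by apply: le_trans h _; rewrite lerDr.
Qed.

Lemma unitvE (n : nat) (i1 i : 'I_n) : unitv R i1 i 0 = (i == i1)%:R.
Proof. by rewrite /unitv mxE andbT. Qed.

Lemma dot_sq (n : nat) (a b : 'cV[R]_n) :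
  dot (a + b) (a + b) = dot a a + 2 * dot a b + dot b b.
Proof. rewrite dotDl !dotDr (dotC b a); ring. Qed.

End Aux.

Theorem mainTheorem6 (R : realType) (n m : nat) (hn : (0 < n)%N)
    (tl hd : 'I_m -> 'I_n) (lam : R) :
  simple_connected_graph tl hd ->
  0 < lam < 1 ->
  let V := PTDF (incidence R tl hd) in
  let e1 := unitv R (Ordinal hn) in
  forall gam : 'cV[R]_n, in_Gamma (Ordinal hn) gam ->
  exists eps0 : R, 0 < eps0 /\
    forall eps : R, 0 <= eps < eps0 ->
      let d := e1 + eps *: gam in
      (forall k, 0 <= (V *m d) k 0) ->
      A_I V lam (Istar V lam d) *m e1
        = (1 - lam) *: e1 + (lam / n%:R) *: const_mx 1.
Proof.
move=> G /andP [l0 l1] V e1 gam [g1 gnn gs].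
set i1 := Ordinal hn.
set e := (const_mx 1 : 'cV[R]_n).
set g0 := (1 - lam) *: e1 + (lam / n%:R) *: e.
have n0 : (0 < (n%:R : R)) by rewrite ltr0n.
set K0 := \sum_k (`|(V *m e1) k 0| + `|(V *m gam) k 0|).
have K0ge : 0 <= K0 by apply: sumr_ge0 => k _; rewrite addr_ge0.
pose D (p : {set 'I_(2 * m).+1} * 'I_n) := (A_I V lam p.1 *m e1 - g0) p.2 0.
have [dl0 dlb] := inv_sum_bound D.
set del := (1 + _)^-1 in dl0 dlb.
set M := \sum_(p : {set 'I_(2 * m).+1} * 'I_n) `|(A_I V lam p.1 *m gam) p.2 0|.
have M0 : 0 <= M by apply: sumr_ge0.
set eta := Num.min (lam / n%:R) del.
have eta0 : 0 < eta by rewrite lt_min dl0 andbT divr_gt0.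
exists (Num.min 1 (Num.min (eta ^+ 2 / (16 * K0 + 1)) (eta / (2 * (M + 2))))).
split.
  rewrite !lt_min ltr01 /=; apply/andP; split; apply: divr_gt0 => //.
  - by rewrite exprn_gt0.
  - by rewrite ltr_wpDl ?ltr01 // mulr_ge0.
  - by rewrite mulr_gt0 // ltr_wpDl // ltr0n.
move=> eps /andP [eps0 epslt] d hVd.
move: epslt; rewrite !lt_min => /andP [eps1 /andP [eps2 eps3]].
have epsle1 : eps <= 1 by apply: ltW.
have gam_le1 i : gam i 0 <= 1.
  rewrite -gs /sumv; apply: (@term_le_sum R _ (fun j => gam j 0)) => j; exact: gnn.
have dE i : d i 0 = (i == i1)%:R + eps * gam i 0 by rewrite /d mxDE mxZE unitvE.
have dnn i : 0 <= d i 0 by rewrite dE addr_ge0 ?ler0n // mulr_ge0.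
have sd : sumv d = 1 + eps by rewrite /d sumvD sumvZ sumv_unit gs mulr1.
have VeZ : V *m e = 0 by rewrite /V /PTDF; exact: Ve.
have habs k : absv (V *m d) k 0 = (V *m d) k 0 by rewrite mxE ger0_norm.
set c := lam * (1 + eps) / n%:R.
set g0d := (1 - lam) *: d + c *: e.
have VdE k : (V *m d) k 0 = (V *m e1) k 0 + eps * (V *m gam) k 0.
  by rewrite /d mulmxDr mxDE -scalemxAr mxZE.
have fg0d : feasible V lam d g0d.
  split.
  - move=> i; rewrite /g0d mxDE !mxZE [e i 0]mxE mulr1.
    apply: addr_ge0; first by rewrite mulr_ge0 ?dnn // subr_ge0 ltW.
    apply: divr_ge0; last exact: ler0n.
    by apply: mulr_ge0; [exact: ltW | exact: addr_ge0].
  - rewrite /g0d sumvD !sumvZ sumv_e sd /c; field.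
    by rewrite gt_eqF.
  - move=> k; rewrite habs.
    have -> : d - g0d = lam *: d - c *: e.
      by apply/matrixP => i j; rewrite !mxE; ring.
    rewrite mulmxBr -!scalemxAr VeZ scaler0 subr0 mxZE.
    have := hVd k => h; apply/andP; split; last by [].
    have : 0 <= lam * (V *m d) k 0 by rewrite mulr_ge0 // ltW.
    move=> hh; lra.
have gopt := gstar_exists (ex_intro _ g0d fg0d).
set g := gstar V lam d in gopt *.
have [[gnn' gsum gbox] gmin] := gopt.
set u := g - g0d.
have su : sumv u = 0 by case: fg0d => _ sg _; rewrite /u sumvB gsum sg subrr.
have hgg : dot g g <= dot g0d g0d.
  have := gmin g0d fg0d; rewrite !objectiveE ler_pM2l ?invr_gt0 ?ltr0n //.
have gE : g = g0d + u by rewrite /u addrC subrK.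
have hexp : dot g g = dot g0d g0d + 2 * dot g0d u + dot u u.
  by rewrite {1 2}gE dot_sq.
have dCV : dot d u = dot (incidence R tl hd *m d) (V *m u).
  by symmetry; exact: (dot_CV G i1 d su).
have hg0u : dot g0d u = (1 - lam) * dot (incidence R tl hd *m d) (V *m u).
  by rewrite /g0d dotDl !dotZl -sumvE su mulr0 addr0 dCV.
have hVu k : (V *m u) k 0 = (V *m g) k 0 - (1 - lam) * (V *m d) k 0.
  by rewrite /u /g0d mulmxBr mulmxDr -!scalemxAr VeZ scaler0 addr0 mxBE mxZE.
have hterm k : - ((incidence R tl hd *m d) k 0 * (V *m u) k 0) <=
    2 * eps * (`|(V *m e1) k 0| + `|(V *m gam) k 0|).
  rewrite Cx hVu.
  have := gbox k; rewrite habs mulmxBr mxBE => /andP [b1 b2].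
  have Vdk := hVd k.
  have w0 : 0 <= (V *m g) k 0 - (1 - lam) * (V *m d) k 0 by lra.
  have w1 : (V *m g) k 0 - (1 - lam) * (V *m d) k 0 <= 2 * (lam * (V *m d) k 0) by lra.
  have lVd : lam * (V *m d) k 0 <= (V *m d) k 0 by rewrite ler_piMl // ltW.
  have a1 := normr_ge0 ((V *m e1) k 0).
  have a2 := normr_ge0 ((V *m gam) k 0).
  have a3 := ler_norm ((V *m e1) k 0).
  have a4 := ler_norm ((V *m gam) k 0).
  have a5 : eps * (V *m gam) k 0 <= eps * `|(V *m gam) k 0| by rewrite ler_wpM2l.
  have a6 : eps * `|(V *m gam) k 0| <= `|(V *m gam) k 0| by rewrite ler_piMl.
  have dtl := dnn (tl k).
  set w := (V *m g) k 0 - (1 - lam) * (V *m d) k 0 in w0 w1 *.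
  have wd : 0 <= d (tl k) 0 * w by rewrite mulr_ge0.
  case: (eqVneq (hd k) i1) => hk.
  - have dhd : d (hd k) 0 = 1 by rewrite dE hk eqxx g1 mulr0 addr0.
    have ve1 : (V *m e1) k 0 <= 0 := @Ve1_in R n m tl hd G i1 k hk.
    rewrite dhd.
    have : (V *m d) k 0 <= eps * `|(V *m gam) k 0| by rewrite VdE; lra.
    have e0 : 0 <= eps * `|(V *m e1) k 0| by rewrite mulr_ge0.
    move=> h; rewrite mulrBl mul1r.
    lra.
  - have dhd : d (hd k) 0 <= eps.
      rewrite dE (negbTE hk) add0r; rewrite -{2}(mulr1 eps) ler_wpM2l //.
    have h1 : (d (hd k) 0 - d (tl k) 0) * w <= eps * w by rewrite ler_wpM2r //; lra.
    have h2 : eps * w <= eps * (2 * (`|(V *m e1) k 0| + `|(V *m gam) k 0|)).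
      rewrite ler_wpM2l //; rewrite VdE in w1 lVd Vdk; lra.
    have -> : - ((d (tl k) 0 - d (hd k) 0) * w) = (d (hd k) 0 - d (tl k) 0) * w by ring.
    lra.
have hS : - dot (incidence R tl hd *m d) (V *m u) <= 2 * eps * K0.
  rewrite /dot -sumrN /K0 mulr_sumr; apply: ler_sum => k _; exact: hterm.
have hdot : dot u u <= 4 * eps * K0.
  have h1 : (1 - lam) * (- dot (incidence R tl hd *m d) (V *m u)) <= (1 - lam) * (2 * eps * K0).
    by rewrite ler_wpM2l // subr_ge0 ltW.
  have h2 : (1 - lam) * (2 * eps * K0) <= 2 * eps * K0.
    by rewrite ler_piMl // ?mulr_ge0 // lerBlDr lerDl ltW.
  have h3 := dot_ge0 u.
  move: hgg; rewrite hexp hg0u => h; lra.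
have eps1' : eps * (16 * K0 + 1) < eta ^+ 2.
  by rewrite -ltr_pdivlMr // ltr_wpDl ?ltr01 // mulr_ge0.
have eps3' : eps * (2 * (M + 2)) < eta.
  by rewrite -ltr_pdivlMr // mulr_gt0 // ltr_wpDl // ltr0n.
have eK : 0 <= eps * K0 by rewrite mulr_ge0.
have eM : 0 <= eps * M by rewrite mulr_ge0.
have ui i : `|u i 0| < eta / 2.
  have h1 : u i 0 * u i 0 <= dot u u.
    apply: (@term_le_sum R _ (fun j => u j 0 * u j 0)) => j.
    by rewrite -expr2 sqr_ge0.
  have h2 : `|u i 0| * `|u i 0| = u i 0 * u i 0.
    by rewrite -normrM ger0_norm // -expr2 sqr_ge0.
  rewrite ltNge; apply/negP => h.
  have h3 : eta / 2 * (eta / 2) <= `|u i 0| * `|u i 0|.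
    by apply: ler_pM => //; rewrite divr_ge0 // ltW.
  move: eps1'; rewrite expr2 => h4.
  lra.
have etale : eta <= lam / n%:R by rewrite ge_min lexx.
have etale' : eta <= del by rewrite ge_min lexx orbT.
have clam : lam / n%:R <= c.
  rewrite /c ler_wpM2r ?invr_ge0 ?ler0n //.
  by rewrite mulrDr mulr1 lerDl mulr_ge0 // ltW.
have gpos i : 0 < g i 0.
  have -> : g i 0 = g0d i 0 + u i 0 by rewrite {1}gE mxDE.
  have h1 : c <= g0d i 0.
    rewrite /g0d mxDE !mxZE [e i 0]mxE mulr1 lerDr mulr_ge0 ?dnn //.
    by rewrite subr_ge0 ltW.
  have := ui i; have := ler_norm (u i 0); have := ler_norm (- u i 0); rewrite normrN.
  lra.
have hA := @AI_d R n m V lam d hn VeZ hVd gopt gpos.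
rewrite -/g in hA.
set A := A_I V lam (Istar V lam d) in hA *.
have Ae1 : A *m e1 = g - eps *: (A *m gam).
  by rewrite -hA /d mulmxDr -scalemxAr addrK.
have ln1 : lam / n%:R <= 1.
  rewrite ler_pdivrMr // mul1r; apply: le_trans (ltW l1) _.
  by rewrite ler1n.
apply/matrixP => i j; rewrite ord1; apply/eqP; rewrite -subr_eq0 -mxBE; apply/eqP.
have hD : D (Istar V lam d, i) = (A *m e1 - g0) i 0 by [].
rewrite -hD; apply/eqP; apply: contraT => hne.
have hdel := dlb _ hne.
have hM : `|(A *m gam) i 0| <= M.
  exact: (@term_le_sum R _ (fun p : {set 'I_(2 * m).+1} * 'I_n =>
            `|(A_I V lam p.1 *m gam) p.2 0|) (Istar V lam d, i)).
have Dexpr : D (Istar V lam d, i) = u i 0 + eps * ((1 - lam) * gam i 0 + lam / n%:R)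
    - eps * (A *m gam) i 0.
  rewrite hD Ae1 /u !mxBE mxZE /g0d /g0 !mxDE !mxZE [e i 0]mxE dE unitvE /c -/i1.
  ring.
have hAg : `|eps * (A *m gam) i 0| <= eps * M.
  by rewrite normrM ger0_norm // ler_wpM2l.
have t1 : eps * ((1 - lam) * gam i 0 + lam / n%:R) <= 2 * eps.
  have : (1 - lam) * gam i 0 <= 1.
    have hl : 0 <= 1 - lam by lra.
    apply: le_trans (_ : (1 - lam) * 1 <= 1); last by lra.
    by rewrite ler_wpM2l // gam_le1.
  move=> hh; rewrite mulrC ler_wpM2r //; lra.
have t0 : 0 <= eps * ((1 - lam) * gam i 0 + lam / n%:R).
  by rewrite mulr_ge0 // addr_ge0 ?divr_ge0 ?ler0n ?mulr_ge0 // ?subr_ge0 ltW.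
have q1 := ui i; have q2 := ler_norm (u i 0); have q3 := ler_norm (- u i 0).
rewrite normrN in q3.
have q4 := ler_norm (eps * (A *m gam) i 0); have q5 := ler_norm (- (eps * (A *m gam) i 0)).
rewrite normrN in q5.
have hDn : `|D (Istar V lam d, i)| < eta.
  rewrite Dexpr ltr_norml; apply/andP; split; lra.
lra.
Qed.
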